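(* Let $\alpha\in\mathbb{R}$, let $p$ be a positive integer, $a\in\mathbb{R}$, and let $f$ be a real function defined on $\mathbb{N}_{a-p+1}=\{a-p+1,a-p+2,\dots\}$. Then for all $t\in\mathbb{N}_{a+p}$, $$\nabla_a^{-\alpha}\nabla^p f(t)=\nabla^p\nabla_a^{-\alpha}f(t)-\sum_{k=0}^{p-1}\frac{(t-a)^{\overline{\alpha-p+k}}}{\Gamma(\alpha+k-p+1)}\nabla^k f(a).$$
   Context: Notation: $\mathbb{N}_c=\{c,c+1,\dots\}$, $\rho(t)=t-1$, $\nabla g(t)=g(t)-g(t-1)$, $\nabla^m=\nabla(\nabla^{m-1})$. Rising factorial: $t^{\overline{\beta}}=\Gamma(t+\beta)/\Gamma(t)$ with $0^{\overline{\beta}}=0$; the reciprocal of $\Gamma$ at a pole is taken to be $0$. For $\gamma>0$ the nabla left fractional sum is $\nabla_a^{-\gamma}g(t)=\frac{1}{\Gamma(\gamma)}\sum_{s=a+1}^{t}(t-\rho(s))^{\overline{\gamma-1}}g(s)$, where a sum with upper limit smaller than lower limit is $0$ (so these sums vanish for $t\le a$). For $\beta>0$, let $n=[\beta]+1$ with $[\beta]$ the greatest integer strictly less than $\beta$; the nabla left fractional difference is $\nabla_a^{\beta}g(t)=\nabla^n\nabla_a^{-(n-\beta)}g(t)$ (the operator of order $0$ being the identity). In the claim, for $\alpha<0$ the symbol $\nabla_a^{-\alpha}$ means the nabla left fractional difference of order $-\alpha>0$, and for $\alpha=0$ it is the identity. *)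

(* Defs.v *)
From Stdlib Require Import Reals Lra Lia ClassicalEpsilon Arith.Factorial.
Open Scope R_scope.

Fixpoint sum_range (F : nat -> R) (n : nat) : R :=
  match n with
  | O => 0
  | S k => sum_range F k + F k
  end.

Fixpoint prod_upto (F : nat -> R) (n : nat) : R :=
  match n with
  | O => F O
  | S k => prod_upto F k * F (S k)
  end.

(** Gamma function, via Gauss' (Euler's) limit formula for the reciprocal
    Gamma function, which is entire:
      1/Gamma(x) = lim_{m->oo} x(x+1)...(x+m) / (m! m^x).
    RGamma x is this limit (it vanishes exactly at the poles 0,-1,-2,...). *)
Definition RGamma_seq (x : R) (n : nat) : R :=
  prod_upto (fun i => x + INR i) (S n) / (INR (fact (S n)) * Rpower (INR (S n)) x).

Definition RGamma (x : R) : R :=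
  epsilon (inhabits 0) (fun l => Un_cv (RGamma_seq x) l).

(* Gamma x = 1 / RGamma x; at a pole RGamma x = 0 and Stdlib's / 0 = 0,
   so that the reciprocal / Gamma x = RGamma x is 0 at poles, as required. *)
Definition Gamma (x : R) : R := / RGamma x.

Definition rising (t beta : R) : R :=
  if Req_EM_T t 0 then 0 else Gamma (t + beta) / Gamma t.

Definition nabla (g : R -> R) (t : R) : R := g t - g (t - 1).

Fixpoint nabla_pow (m : nat) (g : R -> R) : R -> R :=
  match m with
  | O => g
  | S k => nabla (nabla_pow k g)
  end.

(** Nabla left fractional sum of order gamma > 0:
    sum_{s=a+1}^{t} (t - rho(s))^{(gamma-1)} g(s) / Gamma(gamma),
    for t in a + Z (the number of terms is t - a, and the sum is 0 for t <= a). *)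
Definition nabla_sum (a gamma : R) (g : R -> R) (t : R) : R :=
  sum_range (fun j => let s := a + INR (S j) in
                      / Gamma gamma * rising (t - (s - 1)) (gamma - 1) * g s)
            (Z.to_nat (Int_part (t - a))).

(** For beta > 0, n = [beta] + 1 where [beta] is the greatest integer
    strictly less than beta, i.e. n = ceil(beta) = 1 - up(-beta). *)
Definition frac_n (beta : R) : nat := Z.to_nat (1 - up (- beta)).

Definition nabla_sum0 (a gamma : R) (g : R -> R) : R -> R :=
  if Req_EM_T gamma 0 then g else nabla_sum a gamma g.

Definition nabla_diff (a beta : R) (g : R -> R) : R -> R :=
  nabla_pow (frac_n beta) (nabla_sum0 a (INR (frac_n beta) - beta) g).

Definition nabla_frac (a alpha : R) (g : R -> R) : R -> R :=
  match total_order_T alpha 0 with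
  | inleft (left _) => nabla_diff a (- alpha) g
  | inleft (right _) => g
  | inright _ => nabla_sum a alpha g
  end.

(* Main.v *)
Require Import Defs.
From Stdlib Require Import Reals.
From Stdlib Require Import Lra Lia ClassicalEpsilon ZArith.
Open Scope R_scope.

Lemma prod_upto_ext F G n : (forall i, (i <= n)%nat -> F i = G i) -> prod_upto F n = prod_upto G n.
Proof. induction n; intros H; simpl. apply H; lia. rewrite IHn by (intros; apply H; lia). rewrite H by lia; reflexivity. Qed.

Lemma prod_upto_shift F n : prod_upto F (S n) = F O * prod_upto (fun i => F (S i)) n.
Proof. induction n. simpl. reflexivity. change (prod_upto F (S (S n))) with (prod_upto F (S n) * F (S (S n))).
rewrite IHn. simpl. ring. Qed.

Lemma prod_upto_nonneg F n : (forall i, 0 <= F i) -> 0 <= prod_upto F n.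
Proof. intros H; induction n; simpl. apply H. apply Rmult_le_pos; auto. Qed.

Lemma INR_pos n : 0 < INR (S n).
Proof. apply lt_0_INR; lia. Qed.

Lemma fact_pos' n : 0 < INR (fact n).
Proof. apply lt_0_INR. apply lt_O_fact. Qed.

Lemma seq_nonneg x n : 0 <= x -> 0 <= RGamma_seq x n.
Proof. intros Hx. unfold RGamma_seq. unfold Rdiv. apply Rmult_le_pos.
 apply prod_upto_nonneg. intros i. pose proof (pos_INR i). lra.
 apply Rlt_le, Rinv_0_lt_compat. apply Rmult_lt_0_compat. apply fact_pos'. unfold Rpower; apply exp_pos. Qed.

Lemma ln_gap n : 1 / INR (S (S n)) <= ln (INR (S (S n))) - ln (INR (S n)).
Proof.
 rewrite (S_INR (S n)). set (X := INR (S n)). assert (H1 : 0 < X) by apply INR_pos.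
 pose proof (exp_ineq1_le (ln X - ln (X+1))) as E.
 unfold Rminus in E. rewrite exp_plus in E. rewrite exp_Ropp in E. rewrite !exp_ln in E by lra.
 assert (E2 : (1 + (ln X + - ln (X + 1))) * (X + 1) <= X).
 { apply Rle_trans with (X * /(X+1) * (X+1)); [apply Rmult_le_compat_r; lra | right; field; lra]. }
 apply Rmult_le_reg_r with (X+1). lra.
 unfold Rdiv. rewrite Rmult_1_l, Rinv_l by lra. nra.
Qed.

Lemma seq_decr x : 0 <= x -> Un_decreasing (RGamma_seq x).
Proof.
 intros Hx n. unfold RGamma_seq.
 change (prod_upto (fun i => x + INR i) (S (S n))) with (prod_upto (fun i => x + INR i) (S n) * (x + INR (S (S n)))).
 set (P := prod_upto (fun i => x + INR i) (S n)).
 assert (HP : 0 <= P) by (apply prod_upto_nonneg; intros i; pose proof (pos_INR i); lra).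
 change (fact (S (S n))) with (S (S n) * fact (S n))%nat. rewrite mult_INR.
 set (F := INR (fact (S n))). assert (HF : 0 < F) by apply fact_pos'.
 unfold Rpower. set (L1 := ln (INR (S n))). set (L2 := ln (INR (S (S n)))).
 pose proof (ln_gap n) as G. fold L1 L2 in G.
 pose proof (INR_pos (S n)) as H2.
 assert (Hr : exp (x * L2) = exp (x * L1) * exp (x * (L2 - L1))) by (rewrite <- exp_plus; f_equal; ring).
 pose proof (exp_ineq1_le (x * (L2 - L1))) as E.
 assert (E2 : x / INR (S (S n)) <= x * (L2 - L1)).
 { unfold Rdiv. replace (x * / INR (S (S n))) with (x * (1 / INR (S (S n)))) by (field; lra). apply Rmult_le_compat_l; lra. }
 rewrite Hr. set (A := exp (x * L1)). set (C := exp (x * (L2 - L1))).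
 assert (HA : 0 < A) by apply exp_pos.
 assert (HC : (x + INR (S (S n))) <= INR (S (S n)) * C).
 { apply Rle_trans with (INR (S (S n)) * (1 + x / INR (S (S n)))). right; field; lra.
   apply Rmult_le_compat_l. lra. fold C in E. lra. }
 assert (HC0 : 0 < C) by apply exp_pos.
 apply Rle_trans with (P / (F * A) * ((x + INR (S (S n))) / (INR (S (S n)) * C))).
 right. field. repeat split; lra.
 rewrite <- (Rmult_1_r (P / (F*A))) at 2. apply Rmult_le_compat_l.
 unfold Rdiv. apply Rmult_le_pos; auto. apply Rlt_le, Rinv_0_lt_compat; nra.
 apply Rmult_le_reg_r with (INR (S (S n)) * C). nra. unfold Rdiv. rewrite Rmult_assoc, Rinv_l by nra. lra.
Qed.

Lemma conv_nonneg x : 0 <= x -> exists l, Un_cv (RGamma_seq x) l.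
Proof.
 intros Hx. destruct (decreasing_cv (RGamma_seq x)) as [l Hl].
 apply seq_decr; auto.
 exists 0. intros y [i ->]. unfold opp_seq. pose proof (seq_nonneg x i Hx). lra.
 exists l; auto.
Qed.

Lemma ln_gap2 n : 0 <= ln (INR (S (S n))) - ln (INR (S n)) <= 1 / INR (S n).
Proof.
 rewrite (S_INR (S n)). set (X := INR (S n)). assert (H1 : 0 < X) by apply INR_pos.
 split. assert (ln X < ln (X+1)) by (apply ln_increasing; lra). lra.
 pose proof (exp_ineq1_le (ln (X+1) - ln X)) as E.
 unfold Rminus in E. rewrite exp_plus in E. rewrite exp_Ropp in E. rewrite !exp_ln in E by lra.
 assert (E2 : (X+1) * / X = 1 + 1 / X) by (field; lra). lra.
Qed.

Lemma inv_cv0 : forall eps, eps > 0 -> exists N, forall n, (n >= N)%nat -> 1 / INR (S n) < eps.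
Proof.
 intros eps He. destruct (archimed (/ eps)) as [H1 _].
 exists (Z.to_nat (up (/ eps))). intros n Hn.
 assert (Hup : (0 <= up (/eps))%Z).
 { apply le_IZR. pose proof (Rinv_0_lt_compat eps He). simpl. lra. }
 assert (IZR (up (/eps)) <= INR n).
 { rewrite <- (Z2Nat.id (up (/eps))) by auto. rewrite <- INR_IZR_INZ. apply le_INR; lia. }
 rewrite S_INR. assert (/eps < INR n + 1) by lra.
 pose proof (pos_INR n).
 apply Rmult_lt_reg_r with (INR n + 1). lra. unfold Rdiv. rewrite Rmult_1_l, Rinv_l by lra.
 apply Rmult_lt_reg_l with (/eps). apply Rinv_0_lt_compat; lra.
 rewrite <- Rmult_assoc, Rinv_l, Rmult_1_l by lra. lra.
Qed.

Lemma d_cv : Un_cv (fun n => ln (INR (S n)) - ln (INR (S (S n)))) 0.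
Proof.
 intros eps He. destruct (inv_cv0 eps He) as [N HN]. exists N. intros n Hn.
 unfold R_dist. pose proof (ln_gap2 n). specialize (HN n Hn).
 rewrite Rminus_0_r, Rabs_left1 by lra. lra.
Qed.

Lemma cn_cv x : Un_cv (fun n => exp ((x+1) * (ln (INR (S n)) - ln (INR (S (S n)))))) 1.
Proof.
 assert (K : continuity_pt (fun y => exp ((x+1) * y)) 0) by (apply derivable_continuous_pt; reg).
 pose proof (continuity_seq _ _ _ K d_cv) as K2. simpl in K2. rewrite Rmult_0_r, exp_0 in K2. exact K2.
Qed.

Lemma seq_shift x n : RGamma_seq x (S n) = x * RGamma_seq (x+1) n * exp ((x+1) * (ln (INR (S n)) - ln (INR (S (S n))))).
Proof.
 unfold RGamma_seq.
 rewrite (prod_upto_shift _ (S n)).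
 rewrite (prod_upto_ext (fun i => x + INR (S i)) (fun i => x + 1 + INR i)) by (intros; rewrite S_INR; ring).
 set (Q := prod_upto (fun i => x + 1 + INR i) (S n)).
 change (fact (S (S n))) with (S (S n) * fact (S n))%nat. rewrite mult_INR.
 set (F := INR (fact (S n))). assert (HF : 0 < F) by apply fact_pos'.
 unfold Rpower. set (L1 := ln (INR (S n))). set (L2 := ln (INR (S (S n)))).
 assert (HX : INR (S (S n)) = exp L2) by (unfold L2; rewrite exp_ln; auto; apply INR_pos).
 assert (Hr : exp ((x+1) * L1) = exp ((x+1) * (L1 - L2)) * exp (x * L2) * exp L2)
   by (rewrite <- !exp_plus; f_equal; ring).
 rewrite Hr, HX. pose proof (exp_pos ((x+1)*(L1-L2))). pose proof (exp_pos (x*L2)). pose proof (exp_pos L2).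
 simpl INR at 1. field. repeat split; lra.
Qed.

Lemma cv_unshift (u : nat -> R) l : Un_cv (fun n => u (S n)) l -> Un_cv u l.
Proof.
 intros H. apply (CV_shift u 1). eapply Un_cv_ext; [|exact H]. intros n. simpl. f_equal. lia.
Qed.

Lemma conv_down x L : Un_cv (RGamma_seq (x+1)) L -> Un_cv (RGamma_seq x) (x * L).
Proof.
 intros H. apply cv_unshift.
 eapply Un_cv_ext. intros n. symmetry. apply seq_shift.
 rewrite <- (Rmult_1_r (x*L)). apply CV_mult; [|apply cn_cv].
 replace (x*L) with (x*L) by ring.
 apply (CV_mult (fun _ => x) (RGamma_seq (x+1))); auto.
 intros eps He. exists O. intros. unfold R_dist. rewrite Rminus_eq_0, Rabs_R0. auto.
Qed.

Lemma conv_k k : forall x, - INR k <= x -> exists l, Un_cv (RGamma_seq x) l.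
Proof.
 induction k; intros x Hx.
 - apply conv_nonneg. simpl in Hx. lra.
 - destruct (Rle_lt_dec 0 x). apply conv_nonneg; auto.
   destruct (IHk (x+1)) as [L HL]. rewrite S_INR in Hx. lra.
   exists (x*L). apply conv_down; auto.
Qed.

Lemma conv_all x : exists l, Un_cv (RGamma_seq x) l.
Proof.
 destruct (archimed (-x)) as [H1 _].
 destruct (Rle_lt_dec 0 x). apply conv_nonneg; auto.
 apply (conv_k (Z.to_nat (up (-x)))).
 assert (Hup : (0 <= up (-x))%Z) by (apply le_IZR; simpl; lra).
 rewrite INR_IZR_INZ, Z2Nat.id by auto. lra.
Qed.

Lemma RGamma_spec x : Un_cv (RGamma_seq x) (RGamma x).
Proof. unfold RGamma. apply epsilon_spec. apply conv_all. Qed.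

Lemma RGamma_rec x : RGamma x = x * RGamma (x+1).
Proof.
 apply (UL_sequence (RGamma_seq x)). apply RGamma_spec. apply conv_down, RGamma_spec.
Qed.

Lemma RGamma_negint k : RGamma (- INR k) = 0.
Proof.
 induction k.
 - simpl. rewrite Ropp_0, RGamma_rec. ring.
 - rewrite RGamma_rec. replace (- INR (S k) + 1) with (- INR k) by (rewrite S_INR; ring). rewrite IHk. ring.
Qed.

Lemma RGamma_pole z : (z <= 0)%Z -> RGamma (IZR z) = 0.
Proof.
 intros Hz. replace (IZR z) with (- INR (Z.to_nat (- z))). apply RGamma_negint.
 rewrite INR_IZR_INZ, Z2Nat.id by lia. rewrite opp_IZR. ring.
Qed.

Lemma sum_range_ext F G n : (forall k, (k < n)%nat -> F k = G k) -> sum_range F n = sum_range G n.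
Proof. induction n; intros H; simpl; auto. rewrite IHn by (intros; apply H; lia). rewrite H by lia; auto. Qed.

Lemma sum_range_sub F G n : sum_range (fun k => F k - G k) n = sum_range F n - sum_range G n.
Proof. induction n; simpl. ring. rewrite IHn. ring. Qed.

Lemma sum_range_shift F n : sum_range F (S n) = F O + sum_range (fun j => F (S j)) n.
Proof. induction n; simpl. ring. simpl in IHn. rewrite IHn. ring. Qed.

Lemma sum_range_zero F n : (forall k, (k < n)%nat -> F k = 0) -> sum_range F n = 0.
Proof. intros H. rewrite (sum_range_ext F (fun _ => 0)) by auto. clear H. induction n; simpl; auto. rewrite IHn; ring. Qed.

Lemma div_Gamma x y : x / Gamma y = x * RGamma y.
Proof. unfold Rdiv, Gamma. rewrite Rinv_inv. auto. Qed.

Lemma rising_eq x b : x <> 0 -> rising x b = RGamma x / RGamma (x + b).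
Proof. intros H. unfold rising. destruct (Req_EM_T x 0). contradiction.
 unfold Gamma, Rdiv. rewrite Rinv_inv. ring. Qed.

Lemma rising_0 b : rising 0 b = 0.
Proof. unfold rising. destruct (Req_EM_T 0 0); auto. contradiction. Qed.

Lemma rising_nonpos z b : (z <= 0)%Z -> rising (IZR z) b = 0.
Proof. intros Hz. destruct (Z.eq_dec z 0). subst. apply rising_0.
 rewrite rising_eq. rewrite RGamma_pole by auto. unfold Rdiv; ring.
 intro H. apply eq_IZR in H. auto. Qed.

Lemma Int_part_IZR z : Int_part (IZR z) = z.
Proof. symmetry. apply Int_part_spec. lra. Qed.

Lemma D_lem (z : Z) mu : (2 <= z)%Z \/ mu <> 0 ->
  rising (IZR z) mu / Gamma (mu+1) - rising (IZR z - 1) mu / Gamma (mu + 1)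
  = rising (IZR z) (mu - 1) / Gamma mu.
Proof.
 intros Hc. rewrite !div_Gamma.
 assert (Rm : RGamma mu = mu * RGamma (mu + 1)) by apply RGamma_rec.
 destruct (Z_lt_le_dec 1 z) as [Hz|Hz].
 - assert (Z1 : IZR z <> 0) by (intro H; apply eq_IZR in H; lia).
   assert (Z2 : IZR z - 1 <> 0) by (rewrite <- minus_IZR; intro H; apply eq_IZR in H; lia).
   rewrite !rising_eq by auto.
   assert (R1 : RGamma (IZR z - 1) = (IZR z - 1) * RGamma (IZR z)).
   { rewrite RGamma_rec. f_equal. f_equal. ring. }
   assert (R2 : RGamma (IZR z - 1 + mu) = (IZR z - 1 + mu) * RGamma (IZR z + mu)).
   { rewrite RGamma_rec. f_equal. f_equal. ring. }
   replace (IZR z + (mu - 1)) with (IZR z - 1 + mu) by ring.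
   rewrite R1, R2, Rm.
   destruct (Req_EM_T (RGamma (IZR z + mu)) 0) as [E|E].
   + rewrite E. unfold Rdiv. rewrite !Rmult_0_r, Rinv_0. ring.
   + destruct (Req_EM_T (IZR z - 1 + mu) 0) as [E2|E2].
     * assert (Hmu : mu + 1 = IZR (2 - z)) by (rewrite minus_IZR; simpl; lra).
       rewrite Hmu, (RGamma_pole (2 - z)) by lia. ring.
     * field. auto.
 - destruct (Z.eq_dec z 1) as [->|Hz1].
   + replace (IZR 1 - 1) with 0 by (simpl; ring). rewrite rising_0.
     rewrite !rising_eq by (simpl; lra).
     replace (IZR 1 + (mu - 1)) with mu by (simpl; ring).
     replace (IZR 1 + mu) with (mu + 1) by (simpl; ring).
     destruct Hc as [Hc|Hc]. lia.
     rewrite Rm.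
     destruct (Req_EM_T (RGamma (mu + 1)) 0) as [E|E].
     * rewrite E. unfold Rdiv. rewrite !Rmult_0_r. ring.
     * field. split; auto.
   + rewrite rising_nonpos by lia.
     replace (IZR z - 1) with (IZR (z - 1)) by (rewrite minus_IZR; simpl; ring).
     rewrite !rising_nonpos by lia. ring.
Qed.

Lemma nabla_pt (h : R -> R) a z : nabla h (a + IZR z) = h (a + IZR z) - h (a + IZR (z - 1)).
Proof. unfold nabla. rewrite minus_IZR. replace (a + IZR z - 1) with (a + (IZR z - IZR 1)) by (simpl; ring). auto. Qed.

Lemma ns_Z a g h z : nabla_sum a g h (a + IZR z) =
  sum_range (fun j => / Gamma g * rising (IZR z - INR j) (g - 1) * h (a + INR (S j))) (Z.to_nat z).
Proof.
 unfold nabla_sum. replace (a + IZR z - a) with (IZR z) by ring. rewrite Int_part_IZR.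
 apply sum_range_ext. intros k _. cbv zeta. f_equal. f_equal. f_equal. rewrite S_INR. ring.
Qed.

Lemma L1 a g (h : R -> R) z : nabla_sum a g (nabla h) (a + IZR z) =
  nabla (nabla_sum a g h) (a + IZR z) - rising (IZR z) (g - 1) / Gamma g * h a.
Proof.
 rewrite (nabla_pt (nabla_sum a g h)). rewrite !ns_Z.
 destruct (Z_le_gt_dec z 0) as [Hz|Hz].
 - replace (Z.to_nat z) with O by lia. replace (Z.to_nat (z-1)) with O by lia. simpl.
   rewrite rising_nonpos by auto. unfold Rdiv. ring.
 - destruct (Z.to_nat z) as [|n] eqn:En. lia.
   replace (Z.to_nat (z-1)) with n by lia.
   assert (Ez : IZR z = INR (S n)) by (rewrite INR_IZR_INZ; f_equal; lia).
   assert (Ez1 : IZR (z-1) = INR n) by (rewrite INR_IZR_INZ; f_equal; lia).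
   rewrite Ez1, Ez.
   rewrite (sum_range_ext _ (fun j => / Gamma g * rising (INR (S n) - INR j) (g - 1) * h (a + INR (S j))
       - / Gamma g * rising (INR (S n) - INR j) (g - 1) * h (a + INR j))).
   2:{ intros k _. unfold nabla. replace (a + INR (S k) - 1) with (a + INR k) by (rewrite S_INR; ring). ring. }
   rewrite sum_range_sub. rewrite (sum_range_shift (fun j => / Gamma g * rising (INR (S n) - INR j) (g - 1) * h (a + INR j))).
   rewrite (sum_range_ext (fun j => / Gamma g * rising (INR (S n) - INR (S j)) (g - 1) * h (a + INR (S j)))
      (fun j => / Gamma g * rising (INR n - INR j) (g - 1) * h (a + INR (S j)))).
   2:{ intros k _. replace (INR (S n) - INR (S k)) with (INR n - INR k) by (rewrite !S_INR; ring). auto. }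
   simpl (INR 0). rewrite Rplus_0_r, Rminus_0_r. unfold Rdiv. ring.
Qed.

Definition Bf g q k x := rising x (g - INR q + INR k) / Gamma (g + INR k - INR q + 1).

Definition nonint (g : R) := forall n : Z, g <> IZR n.

Lemma Lq a g f q : forall z, ((Z.of_nat q <= z)%Z \/ nonint g) ->
  nabla_sum a g (nabla_pow q f) (a + IZR z) =
  nabla_pow q (nabla_sum a g f) (a + IZR z) - sum_range (fun k => Bf g q k (IZR z) * nabla_pow k f a) q.
Proof.
 induction q; intros z Hz.
 - simpl. ring.
 - change (nabla_pow (S q) f) with (nabla (nabla_pow q f)).
   rewrite L1. rewrite nabla_pt. rewrite !IHq by (destruct Hz; [left; lia | right; auto]).
   change (nabla_pow (S q) (nabla_sum a g f) (a + IZR z)) with (nabla (nabla_pow q (nabla_sum a g f)) (a + IZR z)).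
   rewrite nabla_pt.
   change (sum_range (fun k => Bf g (S q) k (IZR z) * nabla_pow k f a) (S q)) with
     (sum_range (fun k => Bf g (S q) k (IZR z) * nabla_pow k f a) q + Bf g (S q) q (IZR z) * nabla_pow q f a).
   rewrite (sum_range_ext (fun k => Bf g (S q) k (IZR z) * nabla_pow k f a)
     (fun k => Bf g q k (IZR z) * nabla_pow k f a - Bf g q k (IZR (z-1)) * nabla_pow k f a)).
   2:{ intros k Hk. unfold Bf. rewrite minus_IZR.
       pose proof (D_lem z (g - INR q + INR k)) as D.
       replace (g - INR (S q) + INR k) with (g - INR q + INR k - 1) by (rewrite S_INR; ring).
       replace (g + INR k - INR (S q) + 1) with (g - INR q + INR k) by (rewrite S_INR; ring).
       replace (g + INR k - INR q + 1) with (g - INR q + INR k + 1) by ring.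
       rewrite <- D. simpl (IZR 1). ring.
       destruct Hz as [Hz|Hz]. left; lia. right. intro E. apply (Hz (Z.of_nat q - Z.of_nat k)%Z).
       rewrite minus_IZR, <- !INR_IZR_INZ. lra. }
   rewrite sum_range_sub.
   replace (Bf g (S q) q (IZR z)) with (rising (IZR z) (g-1)/Gamma g)
     by (unfold Bf; f_equal; [f_equal|f_equal]; rewrite S_INR; ring).
   ring.
Qed.

Lemma nabla_pow_nabla p H : nabla_pow p (nabla H) = nabla (nabla_pow p H).
Proof. induction p; simpl; auto. rewrite IHp. auto. Qed.

Lemma nabla_pow_add n p g : nabla_pow n (nabla_pow p g) = nabla_pow (n+p) g.
Proof. induction n; simpl; auto. rewrite IHn. auto. Qed.

Lemma Ln a g f p : nonint g -> forall n z,
  nabla_pow n (nabla_sum a g (nabla_pow p f)) (a + IZR z) =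
  nabla_pow p (nabla_pow n (nabla_sum a g f)) (a + IZR z)
  - sum_range (fun k => Bf (g - INR n) p k (IZR z) * nabla_pow k f a) p.
Proof.
 intros Hg n. induction n; intros z.
 - simpl nabla_pow at 1 3. rewrite Lq by auto. replace (g - INR 0) with g by (simpl; ring). auto.
 - change (nabla_pow (S n) (nabla_sum a g (nabla_pow p f))) with (nabla (nabla_pow n (nabla_sum a g (nabla_pow p f)))).
   change (nabla_pow (S n) (nabla_sum a g f)) with (nabla (nabla_pow n (nabla_sum a g f))).
   rewrite nabla_pow_nabla, !nabla_pt, !IHn.
   rewrite (sum_range_ext (fun k => Bf (g - INR (S n)) p k (IZR z) * nabla_pow k f a)
     (fun k => Bf (g - INR n) p k (IZR z) * nabla_pow k f a - Bf (g - INR n) p k (IZR (z-1)) * nabla_pow k f a)).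
   2:{ intros k Hk. unfold Bf. rewrite minus_IZR.
       pose proof (D_lem z (g - INR n - INR p + INR k)) as D.
       replace (g - INR (S n) - INR p + INR k) with (g - INR n - INR p + INR k - 1) by (rewrite S_INR; ring).
       replace (g - INR (S n) + INR k - INR p + 1) with (g - INR n - INR p + INR k) by (rewrite S_INR; ring).
       replace (g - INR n + INR k - INR p + 1) with (g - INR n - INR p + INR k + 1) by ring.
       rewrite <- D. simpl (IZR 1). ring.
       right. intro E. apply (Hg (Z.of_nat n + Z.of_nat p - Z.of_nat k)%Z).
       rewrite minus_IZR, plus_IZR, <- !INR_IZR_INZ. lra. }
   rewrite sum_range_sub. ring.
Qed.

Theorem theorem2p7 (alpha a : R) (p : nat) (f : R -> R) :
  (0 < p)%nat ->
  forall m : nat, (p <= m)%nat ->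
  let t := a + INR m in
  nabla_frac a alpha (nabla_pow p f) t =
    nabla_pow p (nabla_frac a alpha f) t
    - sum_range (fun k =>
        rising (t - a) (alpha - INR p + INR k)
          / Gamma (alpha + INR k - INR p + 1)
          * nabla_pow k f a) p.
Proof.
 intros Hp m Hm. cbv zeta.
 replace (a + INR m) with (a + IZR (Z.of_nat m)) by (rewrite <- INR_IZR_INZ; auto).
 replace (a + IZR (Z.of_nat m) - a) with (IZR (Z.of_nat m)) by ring.
 set (z := Z.of_nat m).
 assert (HS: forall x, sum_range (fun k => rising x (alpha - INR p + INR k) / Gamma (alpha + INR k - INR p + 1) * nabla_pow k f a) p = sum_range (fun k => Bf alpha p k x * nabla_pow k f a) p) by reflexivity.
 rewrite HS.
 unfold nabla_frac. destruct (total_order_T alpha 0) as [[Hl|He]|Hg].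
 - unfold nabla_diff, nabla_sum0. set (N := frac_n (- alpha)).
   assert (HN : INR N = 1 - IZR (up alpha)).
   { unfold N, frac_n. rewrite Ropp_involutive. destruct (archimed alpha) as [A1 A2].
     assert (Hu : (up alpha < 1)%Z) by (apply lt_IZR; lra).
     rewrite INR_IZR_INZ, Z2Nat.id by lia. rewrite minus_IZR. auto. }
   destruct (archimed alpha) as [A1 A2].
   destruct (Req_EM_T (INR N - - alpha) 0) as [E0|E0].
   + rewrite !nabla_pow_add, Nat.add_comm.
     rewrite sum_range_zero. ring.
     intros k Hk. unfold Bf. rewrite div_Gamma.
     replace (alpha + INR k - INR p + 1) with (IZR (Z.of_nat k - Z.of_nat p + 1 - Z.of_nat N)).
     rewrite RGamma_pole by lia. ring.
     repeat (rewrite ?minus_IZR, ?plus_IZR). rewrite <- !INR_IZR_INZ. simpl (IZR 1). lra.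
   + rewrite Ln.
     replace (INR N - - alpha - INR N) with alpha by ring. auto.
     intros k E. assert (H0 : 0 < IZR k) by lra. assert (H1 : IZR k < 1) by lra.
     apply lt_IZR in H0. apply lt_IZR in H1. lia.
 - subst alpha. rewrite sum_range_zero. ring.
   intros k Hk. unfold Bf. rewrite div_Gamma.
   replace (0 + INR k - INR p + 1) with (IZR (Z.of_nat k - Z.of_nat p + 1)).
   rewrite RGamma_pole by lia. ring.
   repeat (rewrite ?minus_IZR, ?plus_IZR). rewrite <- !INR_IZR_INZ. simpl (IZR 1). lra.
 - rewrite Lq. auto. left. unfold z. lia.
Qed.
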